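(* Consider the continuous-time Markov process on $\mathbb N_0=\{0,1,2,\dots\}$ with rates $q(0,1)=1$, and for $x\ge1$: $q(x,x+1)=\frac{2x-1}{4x}$, $q(x,x-1)=1-\frac{2x-1}{4x}$, all other rates $0$ (so its jump chain has mean drift $-\frac{1}{2x}$ at $x\ge1$). Consider the $2$-leg spider walk with local configurations $L(x)=\{(x,x+1),(x,x+2)\}$, $x\in\mathbb N_0$, i.e. the process on $\{(x,x+1),(x,x+2):x\ge0\}$ in which a leg at $y$ jumps to $y\pm1$ at rate $q(y,y\pm1)$ provided the resulting configuration is again of this form. Then the Markov process is null recurrent whereas the spider walk is positive recurrent.
   Context: A continuous-time Markov process is called null/positive recurrent if its jump chain, with transition probabilities $p(x,y)=q(x,y)/\sum_{z\ne x}q(x,z)$ for $y\ne x$, is null/positive recurrent. *)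

(* Defs.v *)
From Stdlib Require Import Reals List Arith Bool.
Import ListNotations.
Open Scope R_scope.

(* ---------- Generic continuous-time Markov process on a countable space ----
   A process is given by its rate function q : S -> S -> R together with a
   finite list cand x of candidate targets: every y <> x with q x y <> 0
   must occur in cand x (this holds by construction for the concrete
   processes below).  Sums over "z <> x" are taken over the duplicate-free
   candidate list with x removed. *)
Record ctmc := {
  st : Type;
  st_eq_dec : forall x y : st, {x = y} + {x <> y};
  rate : st -> st -> R;
  cand : st -> list st
}.

Definition targets (M : ctmc) (x : st M) : list (st M) :=
  filter (fun z => if st_eq_dec M z x then false else true)
         (nodup (st_eq_dec M) (cand M x)).

Definition sumR {A : Type} (f : A -> R) (l : list A) : R :=
  fold_right (fun a acc => f a + acc) 0 l.

Definition out_rate (M : ctmc) (x : st M) : R :=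
  sumR (rate M x) (targets M x).

Definition jump_p (M : ctmc) (x y : st M) : R :=
  if st_eq_dec M y x then 0 else rate M x y / out_rate M x.

(* first_passage M x n y = P_y(tau_x = n), tau_x = inf{n >= 1 : X_n = x},
   for the jump chain started at y. *)
Fixpoint first_passage (M : ctmc) (x : st M) (n : nat) (y : st M) : R :=
  match n with
  | O => 0
  | S O => jump_p M y x
  | S ((S _) as m) =>
      sumR (fun z => if st_eq_dec M z x then 0
                     else jump_p M y z * first_passage M x m z)
           (targets M y)
  end.

Definition recurrent_state (M : ctmc) (x : st M) : Prop :=
  infinite_sum (fun n => first_passage M x n x) 1.

Definition finite_mean_return (M : ctmc) (x : st M) : Prop :=
  exists m : R, infinite_sum (fun n => INR n * first_passage M x n x) m.

Definition positive_recurrent_state (M : ctmc) (x : st M) : Prop :=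
  recurrent_state M x /\ finite_mean_return M x.

Definition null_recurrent_state (M : ctmc) (x : st M) : Prop :=
  recurrent_state M x /\ ~ finite_mean_return M x.

(* the process is null/positive recurrent iff its jump chain is,
   i.e. every state is null/positive recurrent for the jump chain *)
Definition null_recurrent (M : ctmc) : Prop :=
  forall x : st M, null_recurrent_state M x.
Definition positive_recurrent (M : ctmc) : Prop :=
  forall x : st M, positive_recurrent_state M x.

Definition qbd (x y : nat) : R :=
  match x with
  | O => if Nat.eqb y 1 then 1 else 0
  | S _ =>
      if Nat.eqb y (S x) then (2 * INR x - 1) / (4 * INR x)
      else if Nat.eqb (S y) x then 1 - (2 * INR x - 1) / (4 * INR x)
      else 0
  end.

Definition BD : ctmc := {|
  st := nat;
  st_eq_dec := Nat.eq_dec;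
  rate := qbd;
  cand := fun x => [S x; Nat.pred x]
|}.

(* Configurations (x,x+1) and (x,x+2), x >= 0, encoded as (x,false) and
   (x,true) respectively. *)
Definition spst : Type := (nat * bool)%type.

Definition spst_eq_dec : forall s t : spst, {s = t} + {s <> t}.
Proof. decide equality; [apply bool_dec | apply Nat.eq_dec]. Defined.

Definition config (s : spst) : nat * nat :=
  let (x, b) := s in if b then (x, x + 2)%nat else (x, x + 1)%nat.

Definition decode (c : nat * nat) : option spst :=
  let (a, b) := c in
  if Nat.eqb b (a + 1) then Some (a, false)
  else if Nat.eqb b (a + 2) then Some (a, true)
  else None.

Definition leg_moves (c : nat * nat) : list ((nat * nat) * R) :=
  let (a, b) := c in
     [((S a, b), qbd a (S a)); ((a, S b), qbd b (S b))]
  ++ (match a with O => [] | S a' => [((a', b), qbd a a')] end)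
  ++ (match b with O => [] | S b' => [((a, b'), qbd b b')] end).

Definition pair_eqb (c d : nat * nat) : bool :=
  Nat.eqb (fst c) (fst d) && Nat.eqb (snd c) (snd d).

(* rate from s to t: the rate of a leg move turning config s into config t
   (the move is allowed only if the result is again a configuration, which
   is automatic as t is a state) *)
Definition qspider (s t : spst) : R :=
  sumR (fun m => if pair_eqb (fst m) (config t) then snd m else 0)
       (leg_moves (config s)).

Definition spider_cand (s : spst) : list spst :=
  flat_map (fun m => match decode (fst m) with Some t => [t] | None => [] end)
           (leg_moves (config s)).

Definition SPIDER : ctmc := {|
  st := spst;
  st_eq_dec := spst_eq_dec;
  rate := qspider;
  cand := spider_cand
|}.

(* Main.v *)
Require Import Defs.
From Stdlib Require Import Reals List Lra Lia Arith Bool.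
Import ListNotations.
Open Scope R_scope.

Definition Nop (a : nat -> R) (k : nat) (G : nat -> R) : R :=
  a k * G (S k) + match k with O => 0 | S k' => (1 - a k) * G k' end.

Definition HA (a : nat -> R) : Prop :=
  a O = 1 /\ (forall k, 0 < a k <= 1) /\ (forall k, (1 <= k)%nat -> a k < 1).

Lemma Nop_ext a k G1 G2 : (forall j, G1 j = G2 j) -> Nop a k G1 = Nop a k G2.
Proof. intros H; unfold Nop; rewrite !H; destruct k; [reflexivity|rewrite H; reflexivity]. Qed.

Lemma Nop_add a k G1 G2 : Nop a k G1 + Nop a k G2 = Nop a k (fun j => G1 j + G2 j).
Proof. unfold Nop; destruct k; ring. Qed.

Lemma Nop_scal a k c G : c * Nop a k G = Nop a k (fun j => c * G j).
Proof. unfold Nop; destruct k; ring. Qed.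

Lemma Nop_zero a k : Nop a k (fun _ => 0) = 0.
Proof. unfold Nop; destruct k; ring. Qed.

Lemma Nop_one a k : HA a -> Nop a k (fun _ => 1) = 1.
Proof. intros [H0 _]; unfold Nop; destruct k; [rewrite H0|]; ring. Qed.

Lemma Nop_le a k G1 G2 : HA a -> (forall j, G1 j <= G2 j) -> Nop a k G1 <= Nop a k G2.
Proof.
  intros [H0 [H1 _]] H; unfold Nop. specialize (H1 k).
  destruct k.
  - specialize (H 1%nat). nra.
  - pose proof (H (S (S k))); pose proof (H k). nra.
Qed.

Lemma Nop_nonneg a k G : HA a -> (forall j, 0 <= G j) -> 0 <= Nop a k G.
Proof. intros Ha H. rewrite <- (Nop_zero a k). apply Nop_le; auto. Qed.

Fixpoint fn (a : nat -> R) (x0 : nat) (n k : nat) : R :=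
  match n with
  | O => 0
  | S n' => match n' with
            | O => Nop a k (fun j => if Nat.eqb j x0 then 1 else 0)
            | S _ => Nop a k (fun j => if Nat.eqb j x0 then 0 else fn a x0 n' j)
            end
  end.

Definition Fs a x0 N k := sum_f_R0 (fun n => fn a x0 n k) N.
Definition Ts a x0 N k := sum_f_R0 (fun n => INR n * fn a x0 n k) N.

Lemma fn_nonneg a x0 n k : HA a -> 0 <= fn a x0 n k.
Proof.
  intros Ha. revert k; induction n as [|n IH]; intros k; simpl; [lra|].
  destruct n; apply Nop_nonneg; auto; intros j; destruct (Nat.eqb j x0); auto; lra.
Qed.

Lemma F_rec a x0 N k : Fs a x0 (S N) k = Nop a k (fun j => if Nat.eqb j x0 then 1 else Fs a x0 N j).
Proof.
  revert k; induction N as [|N IH]; intros k.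
  - unfold Fs; simpl. rewrite Rplus_0_l. apply Nop_ext; intros j; destruct (Nat.eqb j x0); reflexivity.
  - unfold Fs in *.
    change (sum_f_R0 (fun n => fn a x0 n k) (S (S N))) with
      (sum_f_R0 (fun n => fn a x0 n k) (S N) + fn a x0 (S (S N)) k).
    rewrite IH. replace (fn a x0 (S (S N)) k) with
      (Nop a k (fun j => if Nat.eqb j x0 then 0 else fn a x0 (S N) j)) by reflexivity.
    rewrite Nop_add. apply Nop_ext; intros j. destruct (Nat.eqb j x0); [ring|].
    simpl sum_f_R0 at 2. reflexivity.
Qed.

Lemma T_rec a x0 N k : Ts a x0 (S N) k =
  Fs a x0 (S N) k + Nop a k (fun j => if Nat.eqb j x0 then 0 else Ts a x0 N j).
Proof.
  revert k; induction N as [|N IH]; intros k.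
  - unfold Ts, Fs; simpl.
    rewrite (Nop_ext a k (fun j => if Nat.eqb j x0 then 0 else 0 * 0) (fun _ => 0)).
    + rewrite Nop_zero. ring.
    + intros j; destruct (Nat.eqb j x0); ring.
  - unfold Ts, Fs in *.
    change (sum_f_R0 (fun n => INR n * fn a x0 n k) (S (S N))) with
      (sum_f_R0 (fun n => INR n * fn a x0 n k) (S N) + INR (S (S N)) * fn a x0 (S (S N)) k).
    change (sum_f_R0 (fun n => fn a x0 n k) (S (S N))) with
      (sum_f_R0 (fun n => fn a x0 n k) (S N) + fn a x0 (S (S N)) k).
    rewrite IH.
    replace (fn a x0 (S (S N)) k) with
      (Nop a k (fun j => if Nat.eqb j x0 then 0 else fn a x0 (S N) j)) by reflexivity.
    rewrite Nop_scal, !Rplus_assoc, !Nop_add. f_equal.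
    apply Nop_ext; intros j. destruct (Nat.eqb j x0); [ring|].
    change (sum_f_R0 (fun n => INR n * fn a x0 n j) (S N)) with
      (sum_f_R0 (fun n => INR n * fn a x0 n j) N + INR (S N) * fn a x0 (S N) j).
    rewrite (S_INR (S N)). ring.
Qed.

Lemma Fs_le1 a x0 N k : HA a -> 0 <= Fs a x0 N k <= 1.
Proof.
  intros Ha. revert k; induction N as [|N IH]; intros k.
  - unfold Fs; simpl; lra.
  - rewrite F_rec. split.
    + apply Nop_nonneg; auto. intros j; destruct (Nat.eqb j x0); [lra|pose proof (IH j); lra].
    + eapply Rle_trans; [apply Nop_le with (G2 := fun _ => 1)|rewrite (Nop_one a k Ha); lra]; auto. intros j; destruct (Nat.eqb j x0); [lra|pose proof (IH j); lra].
Qed.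

Lemma Fs_grow a x0 k : HA a -> Un_growing (fun N => Fs a x0 N k).
Proof. intros Ha N. unfold Fs. rewrite tech5. pose proof (fn_nonneg a x0 (S N) k Ha). lra. Qed.

Lemma Ts_grow a x0 k : HA a -> Un_growing (fun N => Ts a x0 N k).
Proof. intros Ha N. unfold Ts. rewrite tech5. pose proof (fn_nonneg a x0 (S N) k Ha).
  pose proof (pos_INR (S N)). nra. Qed.

Lemma Ts_nonneg a x0 N k : HA a -> 0 <= Ts a x0 N k.
Proof. intros Ha. induction N. unfold Ts; simpl; lra. pose proof (Ts_grow a x0 k Ha N). simpl in H. lra. Qed.

Definition gp (x0 : nat) (g : nat -> R) (j : nat) : R := if Nat.eqb j x0 then 0 else g j.

Definition HR (a : nat -> R) : Prop := exists c, 0 < c <= 1 /\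
  (forall y, (1 <= y)%nat -> c * a y <= 1 - a y) /\ (forall y, (2 <= y)%nat -> a y <= 1 - a y).

Lemma Nop_S a m G : Nop a (S m) G = a (S m) * G (S (S m)) + (1 - a (S m)) * G m.
Proof. reflexivity. Qed.

Lemma gp_ne x0 g j : j <> x0 -> gp x0 g j = g j.
Proof. intros H; unfold gp; destruct (Nat.eqb_spec j x0); [lia|reflexivity]. Qed.
Lemma gp_eq x0 g : gp x0 g x0 = 0.
Proof. unfold gp; rewrite Nat.eqb_refl; reflexivity. Qed.

Lemma harm_zero a x0 g : HA a -> HR a -> (forall k, 0 <= g k <= 1) ->
  (forall k, g k = Nop a k (gp x0 g)) -> forall k, g k = 0.
Proof.
  intros Ha [c [Hc [Hc1 Hc2]]] Hb Hg.
  destruct Ha as [Ha0 [Hap Ha1]].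
  assert (B1 : forall k, (S k <= x0)%nat -> gp x0 g (S k) = gp x0 g k).
  { induction k; intros Hk.
    - rewrite (gp_ne x0 g 0) by lia. rewrite Hg. unfold Nop. rewrite Ha0. ring.
    - assert (IH' := IHk ltac:(lia)).
      pose proof (Hg (S k)) as E. rewrite Nop_S in E. rewrite <- IH' in E.
      rewrite <- (gp_ne x0 g (S k)) in E by lia.
      pose proof (Hap (S k)).
      assert (a (S k) * (gp x0 g (S (S k)) - gp x0 g (S k)) = 0) by lra.
      apply Rmult_integral in H0; destruct H0; lra. }
  assert (B2 : forall d, (d <= x0)%nat -> gp x0 g (x0 - d) = 0).
  { induction d; intros Hd.
    - rewrite Nat.sub_0_r; apply gp_eq.
    - pose proof (B1 (x0 - S d)%nat ltac:(lia)).
      replace (S (x0 - S d)) with (x0 - d)%nat in H by lia. rewrite <- H. apply IHd. lia. }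
  set (Dl := fun i => gp x0 g (x0 + S i) - gp x0 g (x0 + i)).
  assert (E1 : forall i, a (x0 + S i)%nat * Dl (S i) = (1 - a (x0 + S i)%nat) * Dl i).
  { intros i. unfold Dl.
    pose proof (Hg (x0 + S i)%nat) as E.
    rewrite <- (gp_ne x0 g (x0 + S i)) in E by lia.
    replace (x0 + S i)%nat with (S (x0 + i)) in * by lia.
    replace (x0 + S (S i))%nat with (S (S (x0 + i))) by lia.
    rewrite Nop_S in E. lra. }
  assert (D0 : 0 <= Dl 0%nat).
  { unfold Dl. rewrite Nat.add_0_r, gp_eq, gp_ne by lia. pose proof (Hb (x0 + 1)%nat). lra. }
  assert (E2 : forall i, 0 <= Dl i /\ c * Dl 0%nat <= Dl i).
  { induction i.
    - split; [lra|]. nra.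
    - destruct IHi as [IH1 IH2]. pose proof (E1 i). pose proof (Hap (x0 + S i)%nat).
      destruct (Nat.eq_dec (x0 + S i) 1) as [Ey|Ey].
      + assert (i = 0%nat) by lia. subst i.
        pose proof (Hc1 (x0 + 1)%nat ltac:(lia)). rewrite Nat.add_1_r in *.
        split; nra.
      + pose proof (Hc2 (x0 + S i)%nat ltac:(lia)). split; nra. }
  assert (E3 : forall n, INR n * c * Dl 0%nat <= gp x0 g (x0 + n)).
  { induction n.
    - rewrite Nat.add_0_r, gp_eq. simpl. lra.
    - rewrite S_INR. pose proof (E2 n). unfold Dl in *. nra. }
  assert (Z0 : Dl 0%nat = 0).
  { destruct (Rle_lt_or_eq_dec 0 (Dl 0%nat) D0) as [Hlt|]; [|auto].
    destruct (INR_archimed (c * Dl 0%nat) 1) as [n Hn]; [nra|].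
    pose proof (E3 n). unfold gp in H. destruct (Nat.eqb (x0 + n) x0).
    - nra.
    - pose proof (Hb (x0 + n)%nat). nra. }
  assert (E4 : forall i, Dl i = 0).
  { induction i; auto. pose proof (E1 i). pose proof (Hap (x0 + S i)%nat).
    rewrite IHi, Rmult_0_r in H. apply Rmult_integral in H; destruct H; lra. }
  assert (E5 : forall n, gp x0 g (x0 + n) = 0).
  { induction n. rewrite Nat.add_0_r; apply gp_eq. pose proof (E4 n). unfold Dl in H. lra. }
  assert (E6 : forall j, gp x0 g j = 0).
  { intros j. destruct (le_lt_dec j x0).
    - replace j with (x0 - (x0 - j))%nat by lia. apply B2. lia.
    - replace j with (x0 + (j - x0))%nat by lia. apply E5. }
  intros k. destruct (Nat.eq_dec k x0).
  - subst k. rewrite Hg. rewrite (Nop_ext a x0 _ (fun _ => 0)) by apply E6. apply Nop_zero.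
  - rewrite <- (gp_ne x0 g k n). apply E6.
Qed.

Lemma cv_const c : Un_cv (fun _ => c) c.
Proof. intros e He. exists 0%nat. intros. unfold R_dist. rewrite Rminus_diag, Rabs_R0. lra. Qed.

Lemma cv_S U l : Un_cv U l -> Un_cv (fun N => U (S N)) l.
Proof. intros H e He. destruct (H e He) as [N HN]. exists N. intros n Hn. apply HN. lia. Qed.

Lemma Nop_cv a k (G : nat -> nat -> R) (L : nat -> R) :
  (forall j, Un_cv (fun N => G N j) (L j)) -> Un_cv (fun N => Nop a k (G N)) (Nop a k L).
Proof.
  intros H. unfold Nop. destruct k.
  - apply (CV_plus _ (fun _ => 0)); [apply CV_mult; [apply cv_const|apply H]|apply cv_const].
  - apply CV_plus; apply CV_mult; try apply cv_const; apply H.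
Qed.

Lemma cv_if (b : bool) c U l : Un_cv U l -> Un_cv (fun N => if b then c else U N) (if b then c else l).
Proof. destruct b; auto using cv_const. Qed.

Lemma Nop_sub a k G1 G2 : Nop a k G1 - Nop a k G2 = Nop a k (fun j => G1 j - G2 j).
Proof. unfold Nop; destruct k; ring. Qed.

Lemma Fs_ub a x0 k : HA a -> has_ub (fun N => Fs a x0 N k).
Proof. intros Ha. exists 1. intros x [i ->]. apply Fs_le1; auto. Qed.

Lemma Fs_lim a x0 : HA a -> HR a -> forall k, Un_cv (fun N => Fs a x0 N k) 1.
Proof.
  intros Ha Hr.
  set (h := fun k => proj1_sig (growing_cv _ (Fs_grow a x0 k Ha) (Fs_ub a x0 k Ha))).
  assert (Hh : forall k, Un_cv (fun N => Fs a x0 N k) (h k)).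
  { intros k. unfold h. destruct (growing_cv _ _ _); simpl; auto. }
  assert (Hb : forall k, 0 <= h k <= 1).
  { intros k. split.
    - apply Rle_trans with (Fs a x0 0 k). apply Fs_le1; auto.
      apply (growing_ineq (fun N => Fs a x0 N k)); auto. apply Fs_grow; auto.
    - apply Rle_cv_lim with (fun N => Fs a x0 N k) (fun _ => 1); auto using cv_const.
      intros; apply Fs_le1; auto. }
  assert (Heq : forall k, h k = Nop a k (fun j => if Nat.eqb j x0 then 1 else h j)).
  { intros k. apply UL_sequence with (fun N => Fs a x0 (S N) k).
    - apply (cv_S (fun N => Fs a x0 N k)); auto.
    - apply (Un_cv_ext (fun N => Nop a k (fun j => if Nat.eqb j x0 then 1 else Fs a x0 N j))).
      + intros N; rewrite F_rec; reflexivity.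
      + apply Nop_cv. intros j. apply cv_if. auto. }
  assert (Z : forall k, 1 - h k = 0).
  { apply (harm_zero a x0 (fun k => 1 - h k)); auto.
    - intros k; pose proof (Hb k); lra.
    - intros k. rewrite Heq. rewrite <- (Nop_one a k Ha) at 1.
      rewrite Nop_sub. apply Nop_ext. intros j. unfold gp.
      destruct (Nat.eqb j x0); ring. }
  intros k. replace 1 with (h k) by (pose proof (Z k); lra). auto.
Qed.

Definition HP (a : nat -> R) : Prop := exists D : nat -> R, (forall k, 0 <= D k) /\
  (forall k, (1 <= k)%nat -> 1 <= (1 - a k) * D k - a k * D (S k)).

Fixpoint Ef (a : nat -> R) (k : nat) : R :=
  match k with O => 1 | S k' => (1 + (1 - a (S k')) * Ef a k') / a (S k') end.

Fixpoint Uup (D : nat -> R) (x0 n : nat) : R :=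
  match n with O => 0 | S n' => Uup D x0 n' + D (x0 + S n')%nat end.
Fixpoint Udn (a : nat -> R) (x0 n : nat) : R :=
  match n with O => 0 | S n' => Udn a x0 n' + Ef a (x0 - S n')%nat end.

Definition uL a D x0 (y : nat) : R :=
  if Nat.ltb y x0 then Udn a x0 (x0 - y)
  else if Nat.eqb y x0 then 1 + a x0 * D (S x0) + match x0 with O => 0 | S x' => (1 - a x0) * Ef a x' end
  else Uup D x0 (y - x0).

Lemma Udn_S a x0 m : Udn a x0 (S m) = Udn a x0 m + Ef a (x0 - S m)%nat.
Proof. reflexivity. Qed.
Lemma Uup_S D x0 m : Uup D x0 (S m) = Uup D x0 m + D (x0 + S m)%nat.
Proof. reflexivity. Qed.

Lemma Ef_nonneg a k : HA a -> 0 <= Ef a k.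
Proof.
  intros [H0 [H1 H2]]. induction k; simpl; [lra|].
  pose proof (H1 (S k)). apply Rmult_le_pos; [|left; apply Rinv_0_lt_compat; lra]. nra.
Qed.

Lemma Ef_S a k : HA a -> a (S k) * Ef a (S k) = 1 + (1 - a (S k)) * Ef a k.
Proof. intros [H0 [H1 H2]]. simpl. pose proof (H1 (S k)). field. lra. Qed.

Lemma Uup_nonneg D x0 n : (forall k, 0 <= D k) -> 0 <= Uup D x0 n.
Proof. intros H; induction n; simpl; [lra|]. pose proof (H (x0 + S n)%nat); lra. Qed.
Lemma Udn_nonneg a x0 n : HA a -> 0 <= Udn a x0 n.
Proof. intros H; induction n; simpl; [lra|]. pose proof (Ef_nonneg a (x0 - S n) H); lra. Qed.

Lemma uL_nonneg a D x0 y : HA a -> (forall k, 0 <= D k) -> 0 <= uL a D x0 y.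
Proof.
  intros Ha HD. unfold uL. destruct (Nat.ltb y x0); [apply Udn_nonneg; auto|].
  destruct (Nat.eqb y x0); [|apply Uup_nonneg; auto].
  destruct Ha as [H0 [H1 H2]]. pose proof (H1 x0). pose proof (HD (S x0)).
  destruct x0; [nra|]. pose proof (Ef_nonneg a x0 (conj H0 (conj H1 H2))). nra.
Qed.

Lemma uL_lt a D x0 y : (y < x0)%nat -> uL a D x0 y = Udn a x0 (x0 - y).
Proof. intros H; unfold uL. destruct (Nat.ltb_spec y x0); [reflexivity|lia]. Qed.
Lemma uL_gt a D x0 n : uL a D x0 (x0 + S n) = Uup D x0 (S n).
Proof. unfold uL. destruct (Nat.ltb_spec (x0 + S n) x0); [lia|].
  destruct (Nat.eqb_spec (x0 + S n) x0); [lia|]. f_equal; lia. Qed.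

Lemma uL_super a D x0 y : HA a -> (forall k, 0 <= D k) ->
  (forall k, (1 <= k)%nat -> 1 <= (1 - a k) * D k - a k * D (S k)) ->
  1 + Nop a y (gp x0 (uL a D x0)) <= uL a D x0 y.
Proof.
  intros Ha HD HDk.
  destruct (lt_eq_lt_dec y x0) as [[Hlt|Heq]|Hgt].
  - assert (G1 : gp x0 (uL a D x0) (S y) = uL a D x0 y - Ef a y).
    { rewrite (uL_lt a D x0 y Hlt).
      destruct (Nat.eq_dec (S y) x0).
      + subst x0. rewrite gp_eq. replace (S y - y)%nat with 1%nat by lia. simpl.
        rewrite Nat.sub_0_r. ring.
      + rewrite gp_ne by lia. rewrite uL_lt by lia.
        replace (x0 - y)%nat with (S (x0 - S y)) by lia. simpl Udn at 2.
        replace (x0 - S (x0 - S y))%nat with y by lia. ring. }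
    destruct y as [|y'].
    + unfold Nop. rewrite G1. destruct Ha as [H0 _]. rewrite H0. simpl. lra.
    + rewrite Nop_S, G1. rewrite gp_ne by lia. rewrite !uL_lt by lia.
      replace (x0 - y')%nat with (S (x0 - S y')) by lia. rewrite Udn_S.
      replace (x0 - S (x0 - S y'))%nat with y' by lia.
      pose proof (Ef_S a y' Ha). lra.
  - subst y. unfold uL at 2. rewrite Nat.ltb_irrefl, Nat.eqb_refl.
    assert (G1 : gp x0 (uL a D x0) (S x0) = D (S x0)).
    { rewrite gp_ne by lia. replace (S x0) with (x0 + 1)%nat by lia. rewrite uL_gt. simpl.
      replace (x0 + 1)%nat with (S x0) by lia. ring. }
    destruct x0 as [|x'].
    + unfold Nop. rewrite G1. lra.
    + rewrite Nop_S, G1. rewrite gp_ne by lia. rewrite uL_lt by lia.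
      replace (S x' - x')%nat with 1%nat by lia. simpl.
      replace (x' - 0)%nat with x' by lia. lra.
  - destruct y as [|y']; [lia|].
    replace (S y') with (x0 + S (y' - x0))%nat by lia.
    set (n := (y' - x0)%nat).
    replace (x0 + S n)%nat with (S (x0 + n)) by lia.
    rewrite Nop_S.
    assert (G1 : gp x0 (uL a D x0) (S (S (x0 + n))) = uL a D x0 (S (x0 + n)) + D (S (S (x0 + n)))).
    { rewrite gp_ne by lia. replace (S (S (x0 + n))) with (x0 + S (S n))%nat by lia.
      replace (S (x0 + n)) with (x0 + S n)%nat by lia. rewrite !uL_gt. rewrite !Uup_S. ring. }
    assert (G2 : gp x0 (uL a D x0) (x0 + n)%nat = uL a D x0 (S (x0 + n)) - D (S (x0 + n))).
    { replace (S (x0 + n)) with (x0 + S n)%nat by lia. rewrite uL_gt. simpl Uup.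
      destruct n as [|n'].
      - rewrite Nat.add_0_r, gp_eq. simpl. ring.
      - rewrite gp_ne by lia. rewrite uL_gt. ring. }
    rewrite G1, G2. pose proof (HDk (S (x0 + n)) ltac:(lia)). lra.
Qed.

Lemma Ts_le_u a D x0 N y : HA a -> (forall k, 0 <= D k) ->
  (forall k, (1 <= k)%nat -> 1 <= (1 - a k) * D k - a k * D (S k)) ->
  Ts a x0 N y <= uL a D x0 y.
Proof.
  intros Ha HD HDk. revert y; induction N; intros y.
  - unfold Ts; simpl. rewrite Rmult_0_l. apply uL_nonneg; auto.
  - rewrite T_rec. eapply Rle_trans; [|apply (uL_super a D x0 y Ha HD HDk)].
    apply Rplus_le_compat; [apply Fs_le1; auto|].
    apply Nop_le; auto. intros j; unfold gp. destruct (Nat.eqb j x0); [lra|apply IHN].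
Qed.

Lemma pos_nat a x0 : HA a -> HP a -> exists m, infinite_sum (fun n => INR n * fn a x0 n x0) m.
Proof.
  intros Ha [D [HD HDk]].
  assert (Hub : has_ub (fun N => Ts a x0 N x0)).
  { exists (uL a D x0 x0). intros x [i ->]. apply Ts_le_u; auto. }
  destruct (growing_cv _ (Ts_grow a x0 x0 Ha) Hub) as [l Hl].
  exists l. exact Hl.
Qed.

Fixpoint ssum (f : nat -> R) (n : nat) : R :=
  match n with O => 0 | S n' => ssum f n' + f n' end.

Definition HN (a : nat -> R) : Prop := exists b : nat -> R,
  (forall y, (1 <= y)%nat -> 0 < b y <= 1) /\
  (forall y, (1 <= y)%nat -> b (S y) * (1 - a y) = b y * a y) /\
  (forall m M, (1 <= m)%nat -> exists n, M <= ssum (fun j => b (m + j)%nat / (1 - a (m + j)%nat)) n).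

Lemma Nop_ge_up a k G : HA a -> (forall j, 0 <= G j) -> a k * G (S k) <= Nop a k G.
Proof.
  intros [H0 [H1 H2]] HG. unfold Nop. destruct k; [lra|].
  pose proof (H1 (S k)). pose proof (HG k). nra.
Qed.

Lemma null_nat a x0 : HA a -> HR a -> HN a ->
  ~ exists m, infinite_sum (fun n => INR n * fn a x0 n x0) m.
Proof.
  intros Ha Hr [b [Hb [HB Hsum]]] [m Hm].
  assert (Hm' : Un_cv (fun N => Ts a x0 N x0) m) by exact Hm.
  assert (Bnd : forall i, exists B, forall N, Ts a x0 N (x0 + i) <= B).
  { induction i.
    - exists m. intros N. rewrite Nat.add_0_r. apply (growing_ineq (fun N => Ts a x0 N x0)); auto.
      apply Ts_grow; auto.
    - destruct IHi as [B HBd]. set (y := (x0 + i)%nat).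
      destruct Ha as [H0 [H1 H2]].
      exists (B / a y). intros N. pose proof (H1 y).
      apply Rmult_le_reg_l with (a y); [lra|].
      replace (a y * (B / a y)) with B by (field; lra).
      eapply Rle_trans; [|apply (HBd (S N))]. fold y. rewrite T_rec.
      assert (Ha' : HA a) by (split; auto).
      assert (GN : forall j, 0 <= gp x0 (Ts a x0 N) j).
      { intros j; unfold gp; destruct (Nat.eqb j x0); [lra|apply Ts_nonneg; auto]. }
      pose proof (Nop_ge_up a y _ Ha' GN).
      rewrite gp_ne in H3 by (unfold y; lia). replace (S y) with (x0 + S i)%nat in H3 by (unfold y; lia).
      pose proof (Fs_le1 a x0 (S N) y Ha').
      unfold gp in *. lra. }
  assert (Hub : forall i, has_ub (fun N => Ts a x0 N (x0 + i))).
  { intros i. destruct (Bnd i) as [B HBd]. exists B. intros x [N ->]. auto. }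
  set (Sl := fun i => proj1_sig (growing_cv _ (Ts_grow a x0 (x0 + i) Ha) (Hub i))).
  assert (HSl : forall i, Un_cv (fun N => Ts a x0 N (x0 + i)) (Sl i)).
  { intros i. unfold Sl. destruct (growing_cv _ _ _); simpl; auto. }
  assert (Sl_nn : forall i, 0 <= Sl i).
  { intros i. apply Rle_trans with (Ts a x0 0 (x0 + i)). apply Ts_nonneg; auto.
    apply (growing_ineq (fun N => Ts a x0 N (x0 + i))); auto. apply Ts_grow; auto. }
  set (Sp := fun i : nat => match i with O => 0 | S _ => Sl i end).
  assert (Sp_nn : forall i, 0 <= Sp i) by (intros [|i]; simpl; [lra|auto]).
  assert (HF := Fs_lim a x0 Ha Hr).
  assert (Eq : forall i, Sp (S i) = 1 + a (x0 + S i)%nat * Sp (S (S i)) + (1 - a (x0 + S i)%nat) * Sp i).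
  { intros i. simpl Sp at 1 2. apply UL_sequence with (fun N => Ts a x0 (S N) (x0 + S i)).
    - apply (cv_S (fun N => Ts a x0 N (x0 + S i))). auto.
    - apply (Un_cv_ext (fun N => Fs a x0 (S N) (x0 + S i) + (a (x0 + S i)%nat * Ts a x0 N (x0 + S (S i))
          + (1 - a (x0 + S i)%nat) * gp x0 (Ts a x0 N) (x0 + i)))).
      + intros N. rewrite T_rec. f_equal. replace (x0 + S i)%nat with (S (x0 + i)) by lia.
        rewrite Nop_S. unfold gp. destruct (Nat.eqb_spec (S (S (x0 + i))) x0); [lia|].
        replace (S (S (x0 + i))) with (x0 + S (S i))%nat by lia.
        reflexivity.
      + rewrite Rplus_assoc. apply CV_plus.
        * apply (cv_S (fun N => Fs a x0 N (x0 + S i))). auto.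
        * apply CV_plus; apply CV_mult; try apply cv_const; auto.
          destruct i as [|i'].
          -- simpl. apply (Un_cv_ext (fun _ => 0)); [|apply cv_const].
             intros N; rewrite Nat.add_0_r, gp_eq; reflexivity.
          -- apply (Un_cv_ext (fun N => Ts a x0 N (x0 + S i'))); [|auto].
             intros N; rewrite gp_ne by lia; reflexivity. }
  set (Dd := fun i => Sp (S i) - Sp i).
  set (r := fun i => b (x0 + S i)%nat * Dd i).
  set (bb := fun j => b (S x0 + j)%nat / (1 - a (S x0 + j)%nat)).
  destruct Ha as [H0 [H1 H2]].
  assert (Hr1 : forall i, r (S i) = r i - bb i).
  { intros i. unfold r, bb, Dd.
    replace (S x0 + i)%nat with (x0 + S i)%nat by lia.
    replace (x0 + S (S i))%nat with (S (x0 + S i)) by lia.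
    pose proof (HB (x0 + S i)%nat ltac:(lia)) as E.
    pose proof (H2 (x0 + S i)%nat ltac:(lia)). pose proof (Eq i).
    set (y := (x0 + S i)%nat) in *.
    assert (b (S y) = b y * a y / (1 - a y)) by (rewrite <- E; field; lra).
    rewrite H4.
    assert (Hk : a y * (Sp (S (S i)) - Sp (S i)) = (1 - a y) * (Sp (S i) - Sp i) - 1) by lra.
    replace (b y * a y / (1 - a y) * (Sp (S (S i)) - Sp (S i))) with
      (b y / (1 - a y) * (a y * (Sp (S (S i)) - Sp (S i)))) by (field; lra).
    rewrite Hk. field. lra. }
  assert (Hrs : forall i, r i = r 0%nat - ssum bb i).
  { induction i; simpl; [ring|]. rewrite Hr1, IHi. ring. }
  assert (bb_nn : forall j, 0 <= bb j).
  { intros j. unfold bb. pose proof (Hb (S x0 + j)%nat ltac:(lia)). pose proof (H2 (S x0 + j)%nat ltac:(lia)).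
    apply Rmult_le_pos; [lra|left; apply Rinv_0_lt_compat; lra]. }
  assert (ss_mono : forall n k, ssum bb n <= ssum bb (n + k)).
  { intros n k; induction k; [rewrite Nat.add_0_r; lra|]. rewrite Nat.add_succ_r. simpl.
    pose proof (bb_nn (n + k)%nat). lra. }
  destruct (Hsum (S x0) (r 0%nat + 1) ltac:(lia)) as [n Hn]. fold bb in Hn.
  assert (Dneg : forall k, Dd (n + k)%nat <= -1).
  { intros k. pose proof (Hrs (n + k)%nat). pose proof (ss_mono n k).
    pose proof (Hb (x0 + S (n + k))%nat ltac:(lia)). unfold r in *. set (bk := b (x0 + S (n + k))%nat) in *. set (dk := Dd (n + k)%nat) in *. destruct (Rle_dec dk (-1)); [auto|]. assert (bk * (dk + 1) > 0) by (apply Rmult_gt_0_compat; lra). nra. }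
  assert (Sdec : forall k, Sp (n + k)%nat <= Sp n - INR k).
  { induction k. rewrite Nat.add_0_r; simpl; lra.
    rewrite S_INR. pose proof (Dneg k). unfold Dd in H. rewrite Nat.add_succ_r. lra. }
  destruct (INR_archimed 1 (Sp n)) as [k Hk]; [lra|].
  pose proof (Sdec k). pose proof (Sp_nn (n + k)%nat). lra.
Qed.

Lemma sumR_ext {A : Type} (f g : A -> R) l : (forall z, f z = g z) -> sumR f l = sumR g l.
Proof. intros H; induction l; simpl; [reflexivity|rewrite H, IHl; reflexivity]. Qed.

Definition chain_hyps (M : ctmc) (e : nat -> st M) (a : nat -> R) : Prop :=
  (forall i j, e i = e j -> i = j) /\
  (forall k t, jump_p M (e k) t = (if st_eq_dec M t (e (S k)) then a k else 0) +
      match k with O => 0 | S k' => if st_eq_dec M t (e k') then 1 - a k else 0 end) /\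
  (forall k (G : st M -> R), sumR (fun z => jump_p M (e k) z * G z) (targets M (e k)) =
      a k * G (e (S k)) + match k with O => 0 | S k' => (1 - a k) * G (e k') end).

Lemma dec_eqb (M : ctmc) (e : nat -> st M) (Hinj : forall i j, e i = e j -> i = j) i j (u v : R) :
  (if st_eq_dec M (e i) (e j) then u else v) = (if Nat.eqb i j then u else v).
Proof.
  destruct (st_eq_dec M (e i) (e j)) as [E|E]; destruct (Nat.eqb_spec i j) as [F|F]; auto.
  - apply Hinj in E; lia.
  - subst; congruence.
Qed.

Lemma chain_fp M e a : chain_hyps M e a ->
  forall n k x0, first_passage M (e x0) n (e k) = fn a x0 n k.
Proof.
  intros [Hinj [Hp Hs]] n. induction n as [|n IH]; intros k x0; [reflexivity|].
  destruct n as [|n].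
  - cbn [first_passage fn]. rewrite Hp. unfold Nop.
    rewrite (dec_eqb M e Hinj x0 (S k)). destruct k as [|k'].
    + destruct (Nat.eqb_spec x0 1); destruct (Nat.eqb_spec 1 x0); try lia; ring.
    + rewrite (dec_eqb M e Hinj x0 k').
      destruct (Nat.eqb_spec x0 (S (S k'))); destruct (Nat.eqb_spec (S (S k')) x0); try lia;
      destruct (Nat.eqb_spec x0 k'); destruct (Nat.eqb_spec k' x0); try lia; ring.
  - cbn [first_passage]. change (fn a x0 (S (S n)) k) with
      (Nop a k (fun j => if Nat.eqb j x0 then 0 else fn a x0 (S n) j)).
    rewrite (sumR_ext _ (fun z => jump_p M (e k) z *
        (if st_eq_dec M z (e x0) then 0 else first_passage M (e x0) (S n) z))).
    + rewrite Hs. unfold Nop. rewrite !IH.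
      rewrite (dec_eqb M e Hinj (S k) x0 0). destruct k; [reflexivity|].
      rewrite (dec_eqb M e Hinj k x0 0), IH. reflexivity.
    + intros z. destruct (st_eq_dec M z (e x0)); [ring|reflexivity].
Qed.

Lemma chain_recurrent M e a (enc : st M -> nat) : chain_hyps M e a ->
  (forall s, e (enc s) = s) -> HA a -> HR a -> forall x, recurrent_state M x.
Proof.
  intros Hc Hsurj Ha Hr x. rewrite <- (Hsurj x). set (x0 := enc x).
  pose proof (Fs_lim a x0 Ha Hr x0) as H.
  intros eps Heps. destruct (H eps Heps) as [N HN]. exists N. intros n Hn.
  rewrite (sum_eq _ (fun i => fn a x0 i x0)). apply HN; auto.
  intros i _. apply chain_fp; auto.
Qed.

Lemma chain_positive M e a (enc : st M -> nat) : chain_hyps M e a ->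
  (forall s, e (enc s) = s) -> HA a -> HR a -> HP a -> positive_recurrent M.
Proof.
  intros Hc Hsurj Ha Hr Hp x. split; [apply (chain_recurrent M e a enc); auto|].
  rewrite <- (Hsurj x). set (x0 := enc x).
  destruct (pos_nat a x0 Ha Hp) as [m Hm]. exists m.
  intros eps Heps. destruct (Hm eps Heps) as [N HN]. exists N. intros n Hn.
  rewrite (sum_eq _ (fun i => INR i * fn a x0 i x0)). apply HN; auto.
  intros i _. rewrite (chain_fp M e a Hc); auto.
Qed.

Lemma chain_null M e a (enc : st M -> nat) : chain_hyps M e a ->
  (forall s, e (enc s) = s) -> HA a -> HR a -> HN a -> null_recurrent M.
Proof.
  intros Hc Hsurj Ha Hr Hn x. split; [apply (chain_recurrent M e a enc); auto|].
  rewrite <- (Hsurj x). set (x0 := enc x). intros [m Hm].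
  apply (null_nat a x0 Ha Hr Hn). exists m.
  intros eps Heps. destruct (Hm eps Heps) as [N HN]. exists N. intros n Hn'.
  rewrite (sum_eq _ (fun i => INR i * first_passage M (e x0) i (e x0))). apply HN; auto.
  intros i _. rewrite (chain_fp M e a Hc); auto.
Qed.

Lemma harm_exp m n : (1 <= m)%nat ->
  INR (m + n) / INR m <= exp (ssum (fun j => 1 / INR (m + j)) n).
Proof.
  intros Hm. assert (0 < INR m) by (apply lt_0_INR; lia).
  induction n.
  - simpl. rewrite exp_0, Nat.add_0_r. right; field; lra.
  - simpl ssum. rewrite exp_plus.
    assert (0 < INR (m + n)) by (apply lt_0_INR; lia).
    pose proof (exp_ineq1_le (1 / INR (m + n))).
    assert (Eq : INR (m + S n) / INR m = (INR (m + n) / INR m) * (1 + 1 / INR (m + n))).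
    { rewrite Nat.add_succ_r, S_INR. field. lra. }
    rewrite Eq. apply Rmult_le_compat; auto.
    + apply Rmult_le_pos; [lra|left; apply Rinv_0_lt_compat; lra].
    + assert (0 <= 1 / INR (m + n)) by (apply Rmult_le_pos; [lra|left; apply Rinv_0_lt_compat; lra]). lra.
Qed.

Lemma ssum_le f g n : (forall j, f j <= g j) -> ssum f n <= ssum g n.
Proof. intros H; induction n; simpl; [lra|]. pose proof (H n); lra. Qed.

Lemma harm_unb m M : (1 <= m)%nat -> exists n, M <= ssum (fun j => 1 / INR (m + j)) n.
Proof.
  intros Hm. assert (0 < INR m) by (apply lt_0_INR; lia).
  destruct (INR_archimed 1 (INR m * exp M)) as [n Hn]; [lra|].
  exists n. destruct (Rle_dec M (ssum (fun j => 1 / INR (m + j)) n)) as [|Hc]; auto.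
  exfalso. pose proof (harm_exp m n Hm).
  assert (exp (ssum (fun j => 1 / INR (m + j)) n) < exp M) by (apply exp_increasing; lra).
  rewrite plus_INR in H0. assert (0 <= INR n) by apply pos_INR.
  assert ((INR m + INR n) / INR m > exp M).
  { apply Rmult_gt_reg_l with (INR m); auto. replace (INR m * ((INR m + INR n) / INR m)) with (INR m + INR n) by (field; lra). lra. }
  lra.
Qed.

Definition a_bd (k : nat) : R := match k with O => 1 | S _ => (2 * INR k - 1) / (4 * INR k) end.

Lemma targets_BD k : targets BD k = match k with O => [1%nat] | S k' => [S k; k'] end.
Proof.
  destruct k as [|k']; [reflexivity|].
  cbv beta iota delta [targets nodup filter BD st st_eq_dec cand Nat.pred].
  destruct (in_dec Nat.eq_dec (S (S k')) [k']) as [Hi|Hi]; [simpl in Hi; lia|].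
  destruct (in_dec Nat.eq_dec k' []) as [Hi'|Hi']; [destruct Hi'|].
  destruct (Nat.eq_dec (S (S k')) (S k')); [lia|].
  destruct (Nat.eq_dec k' (S k')); [lia|].
  reflexivity.
Qed.

Lemma qbd_S k' t : qbd (S k') t =
  (if Nat.eq_dec t (S (S k')) then a_bd (S k') else 0) +
  (if Nat.eq_dec t k' then 1 - a_bd (S k') else 0).
Proof.
  unfold qbd, a_bd. destruct (Nat.eq_dec t (S (S k'))) as [E|E].
  - subst t. rewrite Nat.eqb_refl. destruct (Nat.eq_dec (S (S k')) k'); [lia|]. ring.
  - destruct (Nat.eqb_spec t (S (S k'))); [lia|].
    destruct (Nat.eq_dec t k') as [F|F].
    + subst t. rewrite Nat.eqb_refl. ring.
    + destruct (Nat.eqb_spec (S t) (S k')); [lia|]. ring.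
Qed.

Lemma qbd_0 t : qbd 0 t = if Nat.eq_dec t 1 then 1 else 0.
Proof. unfold qbd. destruct (Nat.eq_dec t 1); destruct (Nat.eqb_spec t 1); auto; lia. Qed.

Lemma out_BD k : out_rate BD k = 1.
Proof.
  unfold out_rate. rewrite targets_BD. destruct k as [|k']; unfold sumR; cbn [fold_right rate BD].
  - rewrite qbd_0. destruct (Nat.eq_dec 1 1); [ring|lia].
  - rewrite !qbd_S. destruct (Nat.eq_dec (S (S k')) (S (S k'))); [|lia].
    destruct (Nat.eq_dec (S (S k')) k'); [lia|].
    destruct (Nat.eq_dec k' (S (S k'))); [lia|].
    destruct (Nat.eq_dec k' k'); [|lia]. ring.
Qed.

Lemma jump_BD k t : jump_p BD k t = (if Nat.eq_dec t (S k) then a_bd k else 0) +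
   match k with O => 0 | S k' => if Nat.eq_dec t k' then 1 - a_bd k else 0 end.
Proof.
  unfold jump_p. simpl st_eq_dec. rewrite out_BD. simpl rate.
  destruct (Nat.eq_dec t k) as [E|E].
  - subst t. destruct (Nat.eq_dec k (S k)); [lia|]. destruct k; [ring|].
    destruct (Nat.eq_dec (S k) k); [lia|]. ring.
  - destruct k as [|k'].
    + rewrite qbd_0. simpl a_bd. unfold Rdiv. rewrite Rinv_1, Rmult_1_r. ring.
    + rewrite qbd_S. unfold Rdiv. rewrite Rinv_1, !Rmult_1_r. ring.
Qed.

Lemma BD_hyps : chain_hyps BD (fun k => k) a_bd.
Proof.
  split; [auto|split].
  - intros k t. apply jump_BD.
  - intros k G. rewrite targets_BD. destruct k as [|k']; unfold sumR; cbn [fold_right].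
    + rewrite jump_BD. destruct (Nat.eq_dec 1 1); [|lia]. ring.
    + rewrite !jump_BD. destruct (Nat.eq_dec (S (S k')) (S (S k'))); [|lia].
      destruct (Nat.eq_dec (S (S k')) k'); [lia|].
      destruct (Nat.eq_dec k' (S (S k'))); [lia|].
      destruct (Nat.eq_dec k' k'); [|lia]. ring.
Qed.

Lemma a_bd_S k : (1 <= k)%nat -> a_bd k = (2 * INR k - 1) / (4 * INR k).
Proof. intros H; destruct k; [lia|reflexivity]. Qed.

Lemma BD_HA : HA a_bd.
Proof.
  split; [reflexivity|split].
  - intros [|k]; [simpl; lra|]. rewrite a_bd_S by lia.
    assert (1 <= INR (S k)) by (rewrite S_INR; pose proof (pos_INR k); lra).
    split.
    + apply Rmult_lt_0_compat; [lra|apply Rinv_0_lt_compat; lra].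
    + apply Rmult_le_reg_r with (4 * INR (S k)); [lra|]. field_simplify; lra.
  - intros k Hk. rewrite a_bd_S by auto.
    assert (1 <= INR k) by (apply (le_INR 1); lia).
    apply Rmult_lt_reg_r with (4 * INR k); [lra|]. field_simplify; lra.
Qed.

Lemma BD_HR : HR a_bd.
Proof.
  exists 1. split; [lra|].
  assert (K : forall y, (1 <= y)%nat -> a_bd y <= 1 - a_bd y).
  { intros y Hy. rewrite a_bd_S by auto. assert (1 <= INR y) by (apply (le_INR 1); lia).
    apply Rmult_le_reg_r with (4 * INR y); [lra|]. field_simplify; lra. }
  split; intros y Hy; [rewrite Rmult_1_l|]; apply K; lia.
Qed.

Lemma BD_HN : HN a_bd.
Proof.
  exists (fun y => 1 / (2 * INR y - 1)). split; [|split].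
  - intros y Hy. assert (1 <= INR y) by (apply (le_INR 1); lia). split.
    + apply Rmult_lt_0_compat; [lra|apply Rinv_0_lt_compat; lra].
    + apply Rmult_le_reg_r with (2 * INR y - 1); [lra|]. field_simplify; lra.
  - intros y Hy. rewrite a_bd_S by auto. assert (1 <= INR y) by (apply (le_INR 1); lia).
    rewrite S_INR. field. lra.
  - intros m M Hm. destruct (harm_unb m M Hm) as [n Hn]. exists n.
    eapply Rle_trans; [apply Hn|]. apply ssum_le. intros j.
    rewrite a_bd_S by lia. assert (1 <= INR (m + j)) by (apply (le_INR 1); lia).
    set (t := INR (m + j)) in *.
    replace (1 / (2 * t - 1) / (1 - (2 * t - 1) / (4 * t))) with (4 * t / ((2 * t - 1) * (2 * t + 1))) by (field; lra).
    apply Rmult_le_reg_r with (t * ((2 * t - 1) * (2 * t + 1))).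
    { apply Rmult_lt_0_compat; [lra|]. apply Rmult_lt_0_compat; lra. }
    field_simplify; [|lra|lra]. nra.
Qed.

Lemma BD_null : null_recurrent BD.
Proof. apply (chain_null BD (fun k => k) a_bd (fun k => k) BD_hyps); auto using BD_HA, BD_HR, BD_HN. Qed.

Ltac eqb_tac := repeat match goal with |- context [Nat.eqb ?x ?y] => destruct (Nat.eqb_spec x y); try lia end.

Lemma config_F x : config (x, false) = (x, S x).
Proof. simpl. f_equal. lia. Qed.
Lemma config_T x : config (x, true) = (x, S (S x)).
Proof. simpl. f_equal. lia. Qed.

Lemma pe p q t : pair_eqb (p, q) (config t) =
  match decode (p, q) with Some s => if spst_eq_dec s t then true else false | None => false end.
Proof.
  destruct t as [y [|]]; unfold pair_eqb, config, decode; cbn [fst snd];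
  eqb_tac; cbn [andb]; try reflexivity;
  match goal with |- context [spst_eq_dec ?u ?v] => destruct (spst_eq_dec u v) as [E|E] end;
  try reflexivity; try (inversion E; lia); try (exfalso; apply E; f_equal; lia).
Qed.

Lemma dec_pp p q : decode (p, q) = if Nat.eqb q (S p) then Some (p, false)
  else if Nat.eqb q (S (S p)) then Some (p, true) else None.
Proof. unfold decode. eqb_tac; reflexivity. Qed.

Definition upF x := qbd (S x) (S (S x)).
Definition dnF x' := qbd (S x') x'.
Definition upT x := qbd x (S x).
Definition dnT x := qbd (S (S x)) (S x).

Ltac sdec := repeat match goal with |- context [spst_eq_dec ?u ?v] =>
   destruct (spst_eq_dec u v) as [?E|?E]; try subst; try congruence;
   try (match goal with H : (_, _) = (_, _) |- _ => inversion H; lia end) end.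

Lemma q_F x t : qspider (x, false) t = (if spst_eq_dec t (x, true) then upF x else 0) +
   match x with O => 0 | S x' => if spst_eq_dec t (x', true) then dnF x' else 0 end.
Proof.
  unfold qspider. rewrite config_F. unfold leg_moves. destruct x as [|x'].
  - unfold sumR; cbn [fold_right app fst snd]. rewrite !pe, !dec_pp. eqb_tac.
    unfold upF. sdec; ring.
  - unfold sumR; cbn [fold_right app fst snd]. rewrite !pe, !dec_pp. eqb_tac.
    unfold upF, dnF. sdec; ring.
Qed.

Lemma q_T x t : qspider (x, true) t = (if spst_eq_dec t (S x, false) then upT x else 0) +
   (if spst_eq_dec t (x, false) then dnT x else 0).
Proof.
  unfold qspider. rewrite config_T. unfold leg_moves. destruct x as [|x'].
  - unfold sumR; cbn [fold_right app fst snd]. rewrite !pe, !dec_pp. eqb_tac.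
    unfold upT, dnT. sdec; ring.
  - unfold sumR; cbn [fold_right app fst snd]. rewrite !pe, !dec_pp. eqb_tac.
    unfold upT, dnT. sdec; ring.
Qed.

Lemma if_in_false {A B : Type} (d : forall x y : A, {x=y}+{x<>y}) x l (u v : B) :
  ~ In x l -> (if in_dec d x l then u else v) = v.
Proof. intros H; destruct (in_dec d x l); tauto. Qed.

Lemma if_dec_ne {A B : Type} (d : forall x y : A, {x=y}+{x<>y}) x y (u v : B) :
  x <> y -> (if d x y then u else v) = v.
Proof. intros H; destruct (d x y); tauto. Qed.

Lemma if_dec_eq {A B : Type} (d : forall x y : A, {x=y}+{x<>y}) x (u v : B) :
  (if d x x then u else v) = u.
Proof. destruct (d x x); tauto. Qed.

Ltac nin_tac := let H := fresh in intro H; simpl in H;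
  repeat (destruct H as [H|H]; [inversion H; lia|]); exact H.
Ltac neq_tac := let H := fresh in intro H; inversion H; lia.

Lemma targets_F0 : targets SPIDER (0%nat, false) = [(0%nat, true)].
Proof. reflexivity. Qed.

Lemma targets_FS x : targets SPIDER (S x, false) = [(S x, true); (x, true)].
Proof.
  unfold targets. cbn [SPIDER cand st_eq_dec]. unfold spider_cand. rewrite config_F. unfold leg_moves.
  cbn [flat_map app fst]. rewrite !dec_pp. eqb_tac. cbn [app nodup].
  rewrite !if_in_false by nin_tac. cbn [filter]. rewrite !if_dec_ne by neq_tac. reflexivity.
Qed.

Lemma targets_T x : targets SPIDER (x, true) = [(S x, false); (x, false)].
Proof.
  unfold targets. cbn [SPIDER cand st_eq_dec]. unfold spider_cand. rewrite config_T. unfold leg_moves.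
  destruct x as [|x'];
  cbn [flat_map app fst]; rewrite !dec_pp; eqb_tac; cbn [app nodup];
  rewrite !if_in_false by nin_tac; cbn [filter]; rewrite !if_dec_ne by neq_tac; reflexivity.
Qed.

Lemma INR_nn n : 0 <= INR n. Proof. apply pos_INR. Qed.

Lemma upF_cf x : upF x = (2 * INR x + 1) / (4 * INR x + 4).
Proof. unfold upF, qbd. rewrite Nat.eqb_refl. rewrite S_INR. pose proof (INR_nn x). field. lra. Qed.
Lemma dnF_cf x : dnF x = (2 * INR x + 3) / (4 * INR x + 4).
Proof. unfold dnF, qbd. destruct (Nat.eqb_spec x (S (S x))); [lia|]. rewrite Nat.eqb_refl.
  rewrite S_INR. pose proof (INR_nn x). field. lra. Qed.
Lemma dnT_cf x : dnT x = (2 * INR x + 5) / (4 * INR x + 8).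
Proof. unfold dnT, qbd. destruct (Nat.eqb_spec (S x) (S (S (S x)))); [lia|].
  destruct (Nat.eqb_spec (S (S x)) (S (S x))); [|lia].
  rewrite !S_INR. pose proof (INR_nn x). field. lra. Qed.
Lemma upT_0 : upT 0 = 1. Proof. reflexivity. Qed.
Lemma upT_S n : upT (S n) = upF n. Proof. reflexivity. Qed.

Lemma frac_pos p q : 0 < p -> 0 < q -> 0 < p / q.
Proof. intros; apply Rmult_lt_0_compat; [auto|apply Rinv_0_lt_compat; auto]. Qed.

Lemma upF_pos x : 0 < upF x.
Proof. rewrite upF_cf. pose proof (INR_nn x). apply frac_pos; lra. Qed.
Lemma dnF_pos x : 0 < dnF x.
Proof. rewrite dnF_cf. pose proof (INR_nn x). apply frac_pos; lra. Qed.
Lemma dnT_pos x : 0 < dnT x.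
Proof. rewrite dnT_cf. pose proof (INR_nn x). apply frac_pos; lra. Qed.
Lemma upT_pos x : 0 < upT x.
Proof. destruct x; [rewrite upT_0; lra|rewrite upT_S; apply upF_pos]. Qed.

Definition aS (s : spst) : R := match s with
  | (O, false) => 1
  | (S x, false) => upF (S x) / (upF (S x) + dnF x)
  | (x, true) => upT x / (upT x + dnT x) end.

Lemma jump_F0 t : jump_p SPIDER (0%nat, false) t = if spst_eq_dec t (0%nat, true) then 1 else 0.
Proof.
  unfold jump_p, out_rate. rewrite targets_F0. cbn [st_eq_dec SPIDER rate].
  unfold sumR; cbn [fold_right]. rewrite !q_F. rewrite if_dec_eq. pose proof (upF_pos 0).
  destruct (spst_eq_dec t (0%nat, false)) as [E|E].
  - subst. rewrite if_dec_ne by neq_tac. reflexivity.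
  - destruct (spst_eq_dec t (0%nat, true)); field; lra.
Qed.

Lemma jump_FS x t : jump_p SPIDER (S x, false) t =
  (if spst_eq_dec t (S x, true) then aS (S x, false) else 0) +
  (if spst_eq_dec t (x, true) then 1 - aS (S x, false) else 0).
Proof.
  unfold jump_p, out_rate. rewrite targets_FS. cbn [st_eq_dec SPIDER rate].
  unfold sumR; cbn [fold_right]. rewrite !q_F. rewrite !if_dec_eq.
  rewrite (if_dec_ne _ (S x, true) (x, true)) by neq_tac.
  rewrite (if_dec_ne _ (x, true) (S x, true)) by neq_tac.
  pose proof (upF_pos (S x)). pose proof (dnF_pos x). unfold aS.
  destruct (spst_eq_dec t (S x, false)) as [E|E].
  - subst. rewrite !if_dec_ne by neq_tac. ring.
  - destruct (spst_eq_dec t (S x, true)) as [E1|E1]; destruct (spst_eq_dec t (x, true)) as [E2|E2];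
      try (subst; inversion E2; lia); field; lra.
Qed.

Lemma jump_T x t : jump_p SPIDER (x, true) t =
  (if spst_eq_dec t (S x, false) then aS (x, true) else 0) +
  (if spst_eq_dec t (x, false) then 1 - aS (x, true) else 0).
Proof.
  unfold jump_p, out_rate. rewrite targets_T. cbn [st_eq_dec SPIDER rate].
  unfold sumR; cbn [fold_right]. rewrite !q_T. rewrite !if_dec_eq.
  rewrite (if_dec_ne _ (S x, false) (x, false)) by neq_tac.
  rewrite (if_dec_ne _ (x, false) (S x, false)) by neq_tac.
  pose proof (upT_pos x). pose proof (dnT_pos x). unfold aS.
  destruct (spst_eq_dec t (x, true)) as [E|E].
  - subst. rewrite !if_dec_ne by neq_tac. destruct x; ring.
  - destruct (spst_eq_dec t (S x, false)) as [E1|E1]; destruct (spst_eq_dec t (x, false)) as [E2|E2];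
      try (subst; inversion E2; lia); destruct x; field; lra.
Qed.

Fixpoint esp (k : nat) : spst := match k with
  | O => (0%nat, false)
  | S k' => let (x, b) := esp k' in if b then (S x, false) else (x, true) end.
Definition enc (s : spst) : nat := let (x, b) := s in (2 * x + if b then 1 else 0)%nat.

Lemma esp_S k : esp (S k) = let (x, b) := esp k in if b then (S x, false) else (x, true).
Proof. reflexivity. Qed.

Lemma enc_esp k : enc (esp k) = k.
Proof. induction k; [reflexivity|]. rewrite esp_S. destruct (esp k) as [x [|]]; simpl in *; lia. Qed.

Lemma esp_enc s : esp (enc s) = s.
Proof.
  assert (H : forall x, esp (enc (x, false)) = (x, false) /\ esp (enc (x, true)) = (x, true)).
  { induction x as [|x [IH1 IH2]]; [split; reflexivity|].
    assert (E1 : enc (S x, false) = S (enc (x, true))) by (simpl; lia).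
    assert (E2 : enc (S x, true) = S (enc (S x, false))) by (simpl; lia).
    assert (Ef : esp (enc (S x, false)) = (S x, false)) by (rewrite E1, esp_S, IH2; reflexivity).
    split; auto. rewrite E2, esp_S, Ef. reflexivity. }
  destruct s as [x [|]]; apply H.
Qed.

Definition a_sp (k : nat) : R := aS (esp k).

Lemma SP_hyps : chain_hyps SPIDER esp a_sp.
Proof.
  split; [|split].
  - intros i j E. rewrite <- (enc_esp i), <- (enc_esp j), E. reflexivity.
  - intros k t. cbn [st_eq_dec SPIDER]. unfold a_sp. destruct k as [|k'].
    + cbn [esp]. rewrite jump_F0. simpl aS. ring.
    + rewrite !esp_S. destruct (esp k') as [x [|]].
      * rewrite jump_FS. reflexivity.
      * rewrite jump_T. reflexivity.
  - intros k G. unfold a_sp. destruct k as [|k'].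
    + cbn [esp]. rewrite targets_F0. unfold sumR; cbn [fold_right]. rewrite jump_F0, if_dec_eq.
      simpl aS. ring.
    + rewrite !esp_S. destruct (esp k') as [x [|]].
      * rewrite targets_FS. unfold sumR; cbn [fold_right]. rewrite !jump_FS, !if_dec_eq.
        rewrite (if_dec_ne _ (S x, true) (x, true)) by neq_tac.
        rewrite (if_dec_ne _ (x, true) (S x, true)) by neq_tac. ring.
      * rewrite targets_T. unfold sumR; cbn [fold_right]. rewrite !jump_T, !if_dec_eq.
        rewrite (if_dec_ne _ (S x, false) (x, false)) by neq_tac.
        rewrite (if_dec_ne _ (x, false) (S x, false)) by neq_tac. ring.
Qed.

Lemma frac_props u d : 0 < u -> 0 < d -> 0 < u / (u + d) < 1 /\ 1 - u / (u + d) = d / (u + d).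
Proof.
  intros Hu Hd. split; [split|].
  - apply frac_pos; lra.
  - apply Rmult_lt_reg_r with (u + d); [lra|]. field_simplify; lra.
  - field; lra.
Qed.

Lemma esp_eq_enc k s : esp k = s -> k = enc s.
Proof. intros E. rewrite <- (enc_esp k), E. reflexivity. Qed.

Lemma SP_HA : HA a_sp.
Proof.
  split; [reflexivity|split].
  - intros k. unfold a_sp. destruct (esp k) as [[|x] [|]]; cbn [aS]; try lra.
    + pose proof (upT_pos 0); pose proof (dnT_pos 0). destruct (frac_props (upT 0) (dnT 0)) as [[? ?] _]; auto; try split; lra.
    + pose proof (upT_pos (S x)); pose proof (dnT_pos (S x)). destruct (frac_props (upT (S x)) (dnT (S x))) as [[? ?] _]; auto; try split; lra.
    + pose proof (upF_pos (S x)); pose proof (dnF_pos x). destruct (frac_props (upF (S x)) (dnF x)) as [[? ?] _]; auto; try split; lra.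
  - intros k Hk. unfold a_sp. destruct (esp k) as [[|x] [|]] eqn:E; cbn [aS].
    + pose proof (upT_pos 0); pose proof (dnT_pos 0). destruct (frac_props (upT 0) (dnT 0)) as [[? ?] _]; auto; try split; lra.
    + apply esp_eq_enc in E. simpl in E. lia.
    + pose proof (upT_pos (S x)); pose proof (dnT_pos (S x)). destruct (frac_props (upT (S x)) (dnT (S x))) as [[? ?] _]; auto; try split; lra.
    + pose proof (upF_pos (S x)); pose proof (dnF_pos x). destruct (frac_props (upF (S x)) (dnF x)) as [[? ?] _]; auto; try split; lra.
Qed.

Lemma frac_le a b c d : 0 < b -> 0 < d -> a * d <= c * b -> a / b <= c / d.
Proof.
  intros Hb Hd H.
  assert (E : c / d - a / b = (c * b - a * d) * / (b * d)) by (field; lra).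
  assert (0 <= (c * b - a * d) * / (b * d)).
  { apply Rmult_le_pos; [lra|left; apply Rinv_0_lt_compat; nra]. }
  lra.
Qed.

Lemma uF_le x : upF (S x) <= dnF x.
Proof. rewrite upF_cf, dnF_cf, S_INR. pose proof (INR_nn x). apply frac_le; nra. Qed.
Lemma uT_le n : upF n <= dnT (S n).
Proof. rewrite upF_cf, dnT_cf, S_INR. pose proof (INR_nn n). apply frac_le; nra. Qed.

Lemma cond_c c u d : 0 < u -> 0 < d -> c * u <= d -> c * (u / (u + d)) <= 1 - u / (u + d).
Proof. intros Hu Hd H. destruct (frac_props u d Hu Hd) as [_ ->].
  apply Rmult_le_reg_r with (u + d); [lra|]. field_simplify; lra. Qed.

Lemma SP_HR : HR a_sp.
Proof.
  exists (5/8). split; [lra|split].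
  - intros y Hy. unfold a_sp. destruct (esp y) as [[|x] [|]] eqn:E; cbn [aS].
    + apply cond_c; [apply upT_pos|apply dnT_pos|]. rewrite upT_0, dnT_cf. simpl. lra.
    + apply esp_eq_enc in E. simpl in E. lia.
    + apply cond_c; [apply upT_pos|apply dnT_pos|]. rewrite upT_S. pose proof (uT_le x). pose proof (upF_pos x). lra.
    + apply cond_c; [apply upF_pos|apply dnF_pos|]. pose proof (uF_le x). pose proof (upF_pos (S x)). lra.
  - intros y Hy. unfold a_sp. destruct (esp y) as [[|x] [|]] eqn:E; cbn [aS].
    + apply esp_eq_enc in E. simpl in E. lia.
    + apply esp_eq_enc in E. simpl in E. lia.
    + assert (Hc : 1 * upT (S x) <= dnT (S x)) by (rewrite upT_S; pose proof (uT_le x); lra).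
      pose proof (cond_c 1 _ _ (upT_pos (S x)) (dnT_pos (S x)) Hc). lra.
    + assert (Hc : 1 * upF (S x) <= dnF x) by (pose proof (uF_le x); lra).
      pose proof (cond_c 1 _ _ (upF_pos (S x)) (dnF_pos x) Hc). lra.
Qed.

Definition Dsp (k : nat) : R := match k with 1%nat => 11 | _ => 2 * INR k + 1 end.
Lemma Dsp_ne k : k <> 1%nat -> Dsp k = 2 * INR k + 1.
Proof. intros H. destruct k as [|[|k]]; [reflexivity|lia|reflexivity]. Qed.

Lemma cond_D u d D1 D2 : 0 < u -> 0 < d -> u + d <= d * D1 - u * D2 ->
  1 <= (1 - u / (u + d)) * D1 - u / (u + d) * D2.
Proof. intros Hu Hd H. destruct (frac_props u d Hu Hd) as [_ ->].
  apply Rmult_le_reg_r with (u + d); [lra|]. field_simplify; lra. Qed.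

Lemma SP_HP : HP a_sp.
Proof.
  exists Dsp. split.
  - intros k. destruct k as [|[|k]]; unfold Dsp; [simpl; lra|lra|]. pose proof (INR_nn (S (S k))). lra.
  - intros k Hk. unfold a_sp. destruct (esp k) as [[|x] [|]] eqn:E; cbn [aS];
      pose proof (esp_eq_enc _ _ E) as Hk'; simpl in Hk'.
    + subst k. apply cond_D; [apply upT_pos|apply dnT_pos|]. rewrite upT_0, dnT_cf. simpl. lra.
    + lia.
    + rewrite !Dsp_ne by lia.
      assert (IK : INR k = 2 * INR x + 3) by (replace k with (2 * x + 3)%nat by lia; rewrite plus_INR, mult_INR; simpl; ring).
      rewrite S_INR, IK. apply cond_D; [apply upT_pos|apply dnT_pos|].
      rewrite upT_S, upF_cf, dnT_cf, S_INR.
      pose proof (INR_nn x). set (X := INR x) in *.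
      assert (0 < 48 / ((4 * X + 12) * (4 * X + 4))) by (apply frac_pos; nra).
      match goal with |- ?L <= ?R => replace R with (L + 48 / ((4 * X + 12) * (4 * X + 4))) by (field; lra) end.
      lra.
    + rewrite !Dsp_ne by lia.
      assert (IK : INR k = 2 * INR x + 2) by (replace k with (2 * x + 2)%nat by lia; rewrite plus_INR, mult_INR; simpl; ring).
      rewrite S_INR, IK. apply cond_D; [apply upF_pos|apply dnF_pos|].
      rewrite upF_cf, dnF_cf, S_INR.
      pose proof (INR_nn x). set (X := INR x) in *.
      match goal with |- ?L <= ?R => replace R with L by (field; lra) end.
      lra.
Qed.

Lemma SP_pos : positive_recurrent SPIDER.
Proof. apply (chain_positive SPIDER esp a_sp enc SP_hyps esp_enc SP_HA SP_HR SP_HP). Qed.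


Theorem mainTheorem8 : null_recurrent BD /\ positive_recurrent SPIDER.
Proof. split; [apply BD_null|apply SP_pos]. Qed.
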